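(* In the primal–dual differential form setting below, assume in addition that $\star_h:\hat\Lambda^k_d\to\hat\Lambda^{2-k}_p$ is bijective for $k=1,2$. Let $\sigma(t)\in\hat\Lambda^1_p$ be continuously differentiable in $t$, and let $\tilde Q(t)\in\hat\Lambda^1_d$, $\rho(t)\in\hat\Lambda^2_p$ satisfy $\partial_t\sigma+\star_h\tilde Q+\delta^h\rho=0$. Let $\zeta_p=\delta^h\sigma$ and define the dual vorticity 2-form $\zeta_d\,dS:=\star_h^{-1}\zeta_p\in\hat\Lambda^2_d$ and $\tilde v:=\star_h^{-1}\sigma\in\hat\Lambda^1_d$. Then $\zeta_d\,dS=d\tilde v$ and $$\partial_t(\zeta_d\,dS)+d\tilde Q=0 .$$ Consequently, for every cell $e'$ of the dual mesh, $\frac{d}{dt}\int_{e'}\zeta_d\,dS=-\int_{\partial e'}\tilde Q$, and since the integral of $\tilde Q$ along an edge takes the same value from either adjacent cell (with opposite orientation), $\zeta_d$ is locally conserved.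
   Context: Primal–dual differential form setting. $\Omega$ is a smooth closed oriented two-dimensional Riemannian surface with area form $dS$ and Hodge star $\star$; for $k$-forms $\alpha,\beta$ write $\langle\alpha,\beta\rangle=\int_\Omega\alpha\wedge\star\beta$ (the $L^2$ inner product). For $k=0,1,2$, $\hat\Lambda^k_p$ (primal) and $\hat\Lambda^k_d$ (dual) are finite-dimensional spaces of square-integrable, piecewise smooth $k$-forms on $\Omega$ (on a primal and a dual mesh respectively) on which the exterior derivative $d$ is defined globally, with $d\hat\Lambda^k_p\subset\hat\Lambda^{k+1}_p$ and $d\hat\Lambda^k_d\subset\hat\Lambda^{k+1}_d$ for $k=0,1$, $d^2=0$, and such that integration by parts holds: $\int_\Omega d\alpha\wedge\beta=(-1)^{j+1}\int_\Omega\alpha\wedge d\beta$ for $\alpha$ a $j$-form and $\beta$ a $(1-j)$-form taken from these spaces. $\hat\Lambda^0_p$ contains the constant functions. The discrete codifferential $\delta^h:\hat\Lambda^k_p\to\hat\Lambda^{k-1}_p$ ($k=1,2$) is defined by $\langle\gamma,\delta^h\omega\rangle=\langle d\gamma,\omega\rangle$ for all $\gamma\in\hat\Lambda^{k-1}_p$. The discrete Hodge star $\star_h:\hat\Lambda^k_d\to\hat\Lambda^{2-k}_p$ is defined by $\langle\gamma,\star_h\omega\rangle=(-1)^k\int_\Omega\gamma\wedge\omega$ for all $\gamma\in\hat\Lambda^{2-k}_p$. Elements of $\hat\Lambda^1_d$ have tangentially continuous traces across dual-mesh edges, so that their integral along a dual edge is single-valued, and Stokes' theorem $\int_{e'}d\alpha=\int_{\partial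 e'}\alpha$ holds on each dual cell $e'$ for $\alpha\in\hat\Lambda^1_d$. *)

(* Defs.v *)
From Stdlib Require Export Reals.
Open Scope R_scope.

(* Finite-dimensional spaces are represented in coordinates (w.r.t. a fixed
   basis): an element of an n-dimensional space is a vector v : nat -> R of
   which only the entries v i, i < n, are meaningful. *)
Definition vec := nat -> R.
Definition mat := nat -> nat -> R.

Fixpoint sumR (n : nat) (f : nat -> R) : R :=
  match n with O => 0 | S k => sumR k f + f k end.

Definition mv (m : nat) (A : mat) (x : vec) : vec :=
  fun i => sumR m (fun j => A i j * x j).

Definition bil (m n : nat) (B : mat) (x y : vec) : R :=
  sumR m (fun i => sumR n (fun j => x i * B i j * y j)).

Definition dot (n : nat) (u v : vec) : R := sumR n (fun i => u i * v i).

Definition veq (n : nat) (u v : vec) : Prop :=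
  forall i, (i < n)%nat -> u i = v i.

Definition vzero : vec := fun _ => 0.

(* A : (m-dim space) -> (n-dim space) is bijective *)
Definition lin_bij (n m : nat) (A : mat) : Prop :=
  (forall x y, veq n (mv m A x) (mv m A y) -> veq m x y) /\
  (forall y, exists x, veq n (mv m A x) y).

(* Data of the primal-dual setting.
   Primal spaces  Lambda^k_p  have dimension np_k, dual spaces Lambda^k_d
   have dimension nd_k. *)
Record PDSetting := {
  np0 : nat; np1 : nat; np2 : nat;
  nd0 : nat; nd1 : nat; nd2 : nat;
  (* exterior derivatives *)
  dP0 : mat;  (* Lambda^0_p -> Lambda^1_p *)
  dP1 : mat;  (* Lambda^1_p -> Lambda^2_p *)
  dD0 : mat;  (* Lambda^0_d -> Lambda^1_d *)
  dD1 : mat;  (* Lambda^1_d -> Lambda^2_d *)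
  (* L2 inner products <a,b> = int a /\ * b on the primal spaces (Gram matrices) *)
  G0 : mat; G1 : mat; G2 : mat;
  (* wedge pairings  (gamma, omega) |-> int_Omega gamma /\ omega ,
     gamma primal k-form, omega dual (2-k)-form *)
  W0 : mat;   (* Lambda^0_p x Lambda^2_d *)
  W1 : mat;   (* Lambda^1_p x Lambda^1_d *)
  W2 : mat;   (* Lambda^2_p x Lambda^0_d *)
  (* discrete codifferential delta^h *)
  cod1 : mat; (* Lambda^1_p -> Lambda^0_p *)
  cod2 : mat; (* Lambda^2_p -> Lambda^1_p *)
  (* discrete Hodge star *_h : Lambda^k_d -> Lambda^{2-k}_p *)
  hs0 : mat;  (* Lambda^0_d -> Lambda^2_p *)
  hs1 : mat;  (* Lambda^1_d -> Lambda^1_p *)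
  hs2 : mat   (* Lambda^2_d -> Lambda^0_p *)
}.

Definition sym_mat (n : nat) (G : mat) : Prop :=
  forall i j, (i < n)%nat -> (j < n)%nat -> G i j = G j i.

Definition posdef (n : nat) (G : mat) : Prop :=
  forall x, (exists i, (i < n)%nat /\ x i <> 0) -> 0 < bil n n G x x.

Record PDAxioms (S : PDSetting) : Prop := {
  ax_ddP : forall x, veq (np2 S) (mv (np1 S) (dP1 S) (mv (np0 S) (dP0 S) x)) vzero;
  ax_ddD : forall x, veq (nd2 S) (mv (nd1 S) (dD1 S) (mv (nd0 S) (dD0 S) x)) vzero;
  ax_G0sym : sym_mat (np0 S) (G0 S); ax_G0pd : posdef (np0 S) (G0 S);
  ax_G1sym : sym_mat (np1 S) (G1 S); ax_G1pd : posdef (np1 S) (G1 S);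
  ax_G2sym : sym_mat (np2 S) (G2 S); ax_G2pd : posdef (np2 S) (G2 S);
  (* integration by parts: int d a /\ b = (-1)^(j+1) int a /\ d b,
     a primal j-form, b dual (1-j)-form *)
  ax_ibp0 : forall a b,
      bil (np1 S) (nd1 S) (W1 S) (mv (np0 S) (dP0 S) a) b
      = - bil (np0 S) (nd2 S) (W0 S) a (mv (nd1 S) (dD1 S) b);
  ax_ibp1 : forall a b,
      bil (np2 S) (nd0 S) (W2 S) (mv (np1 S) (dP1 S) a) b
      = bil (np1 S) (nd1 S) (W1 S) a (mv (nd0 S) (dD0 S) b);
  (* definition of delta^h : <g, delta^h w> = <d g, w> *)
  ax_cod1 : forall g w,
      bil (np0 S) (np0 S) (G0 S) g (mv (np1 S) (cod1 S) w)
      = bil (np1 S) (np1 S) (G1 S) (mv (np0 S) (dP0 S) g) w;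
  ax_cod2 : forall g w,
      bil (np1 S) (np1 S) (G1 S) g (mv (np2 S) (cod2 S) w)
      = bil (np2 S) (np2 S) (G2 S) (mv (np1 S) (dP1 S) g) w;
  (* definition of *_h : <g, *_h w> = (-1)^k int g /\ w, w dual k-form *)
  ax_hs0 : forall g w,
      bil (np2 S) (np2 S) (G2 S) g (mv (nd0 S) (hs0 S) w)
      = bil (np2 S) (nd0 S) (W2 S) g w;
  ax_hs1 : forall g w,
      bil (np1 S) (np1 S) (G1 S) g (mv (nd1 S) (hs1 S) w)
      = - bil (np1 S) (nd1 S) (W1 S) g w;
  ax_hs2 : forall g w,
      bil (np0 S) (np0 S) (G0 S) g (mv (nd2 S) (hs2 S) w)
      = bil (np0 S) (nd2 S) (W0 S) g w
}.

(* Main.v *)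
Require Import Defs.
From Stdlib Require Import Reals Lra Lia FunctionalExtensionality IndefiniteDescription.
Open Scope R_scope.

Lemma sumR_ext n f g : (forall k, (k < n)%nat -> f k = g k) -> sumR n f = sumR n g.
Proof. induction n; simpl; intros H; auto. rewrite IHn; [rewrite H|]; auto. Qed.

Lemma sumR_add n f g : sumR n (fun k => f k + g k) = sumR n f + sumR n g.
Proof. induction n; simpl; [lra|]. rewrite IHn; lra. Qed.

Lemma sumR_opp n f : sumR n (fun k => - f k) = - sumR n f.
Proof. induction n; simpl; [lra|]. rewrite IHn; lra. Qed.

Lemma sumR_scal n c f : c * sumR n f = sumR n (fun k => c * f k).
Proof. induction n; simpl; [lra|]. rewrite <- IHn; lra. Qed.

Lemma sumR_zero n f : (forall k, (k < n)%nat -> f k = 0) -> sumR n f = 0.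
Proof. induction n; simpl; intros H; auto. rewrite IHn, H; auto; lra. Qed.

Lemma sumR_swap n m f :
  sumR n (fun i => sumR m (fun j => f i j)) = sumR m (fun j => sumR n (fun i => f i j)).
Proof.
  induction n; simpl.
  - symmetry; apply sumR_zero; auto.
  - rewrite IHn, <- sumR_add; auto.
Qed.

Definition ek (k : nat) : vec := fun i => if Nat.eq_dec i k then 1 else 0.

Lemma sumR_delta n s i : (i < n)%nat -> sumR n (fun k => s k * ek k i) = s i.
Proof.
  induction n; intros H; [lia|]. simpl. unfold ek at 2.
  destruct (Nat.eq_dec i n).
  - subst. rewrite sumR_zero; [lra|]. intros k Hk. unfold ek.
    destruct (Nat.eq_dec n k); [lia|lra].
  - rewrite IHn; [lra|lia].
Qed.

Lemma bil_ext_r m n B x y y' : veq n y y' -> bil m n B x y = bil m n B x y'.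
Proof. intros H; unfold bil; apply sumR_ext; intros; apply sumR_ext; intros. rewrite H; auto. Qed.

Lemma bil_ext_l m n B x x' y : veq m x x' -> bil m n B x y = bil m n B x' y.
Proof. intros H; unfold bil; apply sumR_ext; intros; apply sumR_ext; intros. rewrite H; auto. Qed.

Lemma bil_add_r m n B x y z :
  bil m n B x (fun j => y j + z j) = bil m n B x y + bil m n B x z.
Proof.
  unfold bil. rewrite <- sumR_add. apply sumR_ext; intros.
  rewrite <- sumR_add. apply sumR_ext; intros. ring.
Qed.

Lemma bil_opp_r m n B x y : bil m n B x (fun j => - y j) = - bil m n B x y.
Proof.
  unfold bil. rewrite <- sumR_opp. apply sumR_ext; intros.
  rewrite <- sumR_opp. apply sumR_ext; intros. ring.
Qed.

Lemma bil_zero_l m n B y : bil m n B vzero y = 0.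
Proof. unfold bil. apply sumR_zero; intros; apply sumR_zero; intros; unfold vzero; ring. Qed.

Lemma mv_opp m A x i : mv m A (fun j => - x j) i = - mv m A x i.
Proof. unfold mv. rewrite <- sumR_opp. apply sumR_ext; intros; ring. Qed.

Lemma sep n G x y : posdef n G ->
  (forall g, bil n n G g x = bil n n G g y) -> veq n x y.
Proof.
  intros Hpd H i Hi. destruct (Req_dec (x i) (y i)) as [E|E]; auto. exfalso.
  set (z := fun j => x j + - y j).
  assert (Hz : 0 < bil n n G z z) by (apply Hpd; exists i; split; auto; unfold z; lra).
  unfold z at 2 in Hz. rewrite bil_add_r, bil_opp_r, H in Hz. lra.
Qed.

Lemma deriv_sumR n (f : nat -> R -> R) d t :
  (forall k, (k < n)%nat -> derivable_pt_lim (f k) t (d k)) ->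
  derivable_pt_lim (fun s => sumR n (fun k => f k s)) t (sumR n d).
Proof.
  induction n; intros H; simpl.
  - apply derivable_pt_lim_const.
  - apply (derivable_pt_lim_plus (fun s => sumR n (fun k => f k s)) (f n)); auto.
Qed.

Lemma deriv_scal (f : R -> R) a l t :
  derivable_pt_lim f t l -> derivable_pt_lim (fun s => a * f s) t (a * l).
Proof. intros H. apply (derivable_pt_lim_scal f a t l H). Qed.
Theorem mainTheorem13 :
  forall (S : PDSetting), PDAxioms S ->
  (* *_h bijective for k = 1, 2 *)
  lin_bij (np1 S) (nd1 S) (hs1 S) ->
  lin_bij (np0 S) (nd2 S) (hs2 S) ->
  forall (sigma sigma' Qt rho : R -> vec),
  (* sigma is C^1 in t with derivative sigma' *)
  (forall t i, (i < np1 S)%nat ->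
     derivable_pt_lim (fun s => sigma s i) t (sigma' t i)) ->
  (forall i, (i < np1 S)%nat -> continuity (fun t => sigma' t i)) ->
  (* d_t sigma + *_h Q + delta^h rho = 0 *)
  (forall t, veq (np1 S)
     (fun i => sigma' t i + mv (nd1 S) (hs1 S) (Qt t) i
               + mv (np2 S) (cod2 S) (rho t) i) vzero) ->
  forall (zeta vt : R -> vec),
  (* zeta_d dS = *_h^{-1} (delta^h sigma),  vt = *_h^{-1} sigma *)
  (forall t, veq (np0 S) (mv (nd2 S) (hs2 S) (zeta t))
                         (mv (np1 S) (cod1 S) (sigma t))) ->
  (forall t, veq (np1 S) (mv (nd1 S) (hs1 S) (vt t)) (sigma t)) ->
  (* zeta_d dS = d vt *)
  (forall t, veq (nd2 S) (zeta t) (mv (nd1 S) (dD1 S) (vt t))) /\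
  (* d_t (zeta_d dS) + d Q = 0 *)
  (forall t i, (i < nd2 S)%nat ->
     derivable_pt_lim (fun s => zeta s i) t (- mv (nd1 S) (dD1 S) (Qt t) i)) /\
  (* cell-wise flux form: dual cells c < ncell with integral functionals
     cellI c on Lambda^2_d, dual edges e < nedge with (single-valued) edge
     integral functionals edgeI e on Lambda^1_d, signed incidence inc c e,
     and Stokes' theorem on each dual cell *)
  (forall (ncell nedge : nat) (cellI edgeI : nat -> vec) (inc : nat -> nat -> R),
     (forall c alpha, (c < ncell)%nat ->
        dot (nd2 S) (cellI c) (mv (nd1 S) (dD1 S) alpha)
        = sumR nedge (fun e => inc c e * dot (nd1 S) (edgeI e) alpha)) ->
     forall c t, (c < ncell)%nat ->
       derivable_pt_lim (fun s => dot (nd2 S) (cellI c) (zeta s)) t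
         (- sumR nedge (fun e => inc c e * dot (nd1 S) (edgeI e) (Qt t)))).
Proof.
  intros S A [inj1 sur1] [inj2 sur2] sigma sigma' Qt rho Hd Hc Heq zeta vt Hz Hv.
  assert (KB : forall g a, bil (np0 S) (np0 S) (G0 S) g (mv (nd2 S) (hs2 S) (mv (nd1 S) (dD1 S) a))
      = bil (np1 S) (np1 S) (G1 S) (mv (np0 S) (dP0 S) g) (mv (nd1 S) (hs1 S) a)).
  { intros g a. rewrite (ax_hs2 S A), (ax_hs1 S A), (ax_ibp0 S A). lra. }
  pose (X := fun k => proj1_sig (constructive_indefinite_description _ (sur1 (ek k)))).
  assert (HX : forall k, veq (np1 S) (mv (nd1 S) (hs1 S) (X k)) (ek k)).
  { intros k. unfold X. destruct (constructive_indefinite_description _ _); auto. }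
  assert (KC : forall s : vec, veq (np1 S)
     (mv (nd1 S) (hs1 S) (fun j => sumR (np1 S) (fun k => s k * X k j))) s).
  { intros s i Hi. unfold mv.
    transitivity (sumR (nd1 S) (fun j => sumR (np1 S) (fun k => s k * (hs1 S i j * X k j)))).
    { apply sumR_ext; intros. rewrite sumR_scal. apply sumR_ext; intros. ring. }
    rewrite sumR_swap.
    transitivity (sumR (np1 S) (fun k => s k * ek k i)); [|apply sumR_delta; auto].
    apply sumR_ext; intros k Hk. rewrite <- sumR_scal. f_equal. apply HX; auto. }
  assert (P1 : forall t, veq (nd2 S) (zeta t) (mv (nd1 S) (dD1 S) (vt t))).
  { intros t. apply inj2. apply sep with (G := G0 S); [apply (ax_G0pd S A)|].
    intros g. rewrite KB, (bil_ext_r _ _ _ _ _ _ (Hz t)), (ax_cod1 S A).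
    apply bil_ext_r. intros i Hi; symmetry; apply Hv; auto. }
  assert (Hvt : forall s j, (j < nd1 S)%nat ->
     vt s j = sumR (np1 S) (fun k => sigma s k * X k j)).
  { intros s. apply inj1. intros i Hi. rewrite Hv, KC; auto. }
  assert (P2 : forall t i, (i < nd2 S)%nat ->
     derivable_pt_lim (fun s => zeta s i) t (- mv (nd1 S) (dD1 S) (Qt t) i)).
  { intros t i Hi.
    replace (fun s => zeta s i) with
      (fun s => sumR (nd1 S) (fun j => dD1 S i j * sumR (np1 S) (fun k => sigma s k * X k j))).
    2:{ apply functional_extensionality; intros s. rewrite P1; auto. unfold mv.
        apply sumR_ext; intros. rewrite Hvt; auto. }
    set (w := fun j => sumR (np1 S) (fun k => sigma' t k * X k j)).
    assert (Hw : veq (nd2 S) (mv (nd1 S) (dD1 S) w) (mv (nd1 S) (dD1 S) (fun j => - Qt t j))).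
    { apply inj2. apply sep with (G := G0 S); [apply (ax_G0pd S A)|].
      intros g. rewrite !KB. unfold w. rewrite (bil_ext_r _ _ _ _ _ _ (KC (sigma' t))).
      rewrite (bil_ext_r _ _ _ _ (sigma' t) (fun i => - mv (nd1 S) (hs1 S) (Qt t) i + - mv (np2 S) (cod2 S) (rho t) i)).
      2:{ intros j Hj. pose proof (Heq t j Hj) as H. unfold vzero in H. simpl in H. lra. }
      rewrite bil_add_r, !bil_opp_r.
      rewrite (ax_cod2 S A).
      rewrite (bil_ext_l _ _ _ _ vzero _ (ax_ddP S A g)), bil_zero_l.
      rewrite (bil_ext_r _ _ _ _ (mv (nd1 S) (hs1 S) (fun j => - Qt t j)) (fun i => - mv (nd1 S) (hs1 S) (Qt t) i)).
      2:{ intros j Hj. apply mv_opp. }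
      rewrite bil_opp_r. ring. }
    rewrite <- mv_opp, <- Hw by auto. unfold mv, w.
    apply deriv_sumR; intros j Hj. apply deriv_scal.
    apply deriv_sumR; intros k Hk.
    replace (fun s => sigma s k * X k j) with (fun s => X k j * sigma s k)
      by (apply functional_extensionality; intros; ring).
    rewrite Rmult_comm. apply deriv_scal. apply Hd; auto. }
  split; [exact P1|]. split; [exact P2|].
  intros ncell nedge cellI edgeI inc Hst c t Hcn.
  rewrite <- Hst by auto. unfold dot. rewrite <- sumR_opp.
  apply deriv_sumR; intros i Hi.
  replace (- (cellI c i * mv (nd1 S) (dD1 S) (Qt t) i)) with
    (cellI c i * - mv (nd1 S) (dD1 S) (Qt t) i) by ring.
  apply deriv_scal. apply P2; auto.
Qed.
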